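(* Let $K$ be a field and let $S$ be a semigroup with presentation $sgp\langle X\mid R\rangle$ (so $R\subseteq X^\dagger\times X^\dagger$ and the natural morphism $X^\dagger\to S$ induces an isomorphism from $X^\dagger$ modulo the congruence generated by $R$ onto $S$). Let $P:=\{l-r : (l,r)\in R\}\subseteq K[X^\dagger]$, let $Q\subseteq K[X^\dagger]$, and let $Q'$ be the image of $Q$ under the natural morphism $K[X^\dagger]\to K[S]$. Define the mixed set $F$ with tagged part $\dashv\! Q=\{\dashv\! q : q\in Q\}$ and untagged part $P$. Then there is a bijection of sets $$\frac{K[S]}{\langle Q'\rangle^r}\;\cong\;\frac{K[\dashv\! X^\dagger]}{\stackrel{*}{\leftrightarrow}_F},$$ where $\langle Q'\rangle^r$ is the right ideal of the semigroup algebra $K[S]$ generated by $Q'$ and $K[S]/\langle Q'\rangle^r$ is the set of classes of $K[S]$ under $a\sim b\iff a-b\in\langle Q'\rangle^r$.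
   Context: $K[S]$ is the semigroup algebra of $S$ over $K$. $X^\dagger$ is the free semigroup of nonempty words on $X$, $X^*$ the free monoid (empty word $id$), and $K[X^\dagger]$ the free noncommutative $K$-algebra. A semigroup well-ordering $>$ on $X^\dagger$ is fixed: a well-ordering with $m_1>m_2 \Rightarrow um_1v>um_2v$ for all $u,v\in X^*$. For a nonzero polynomial, $\mathtt{LT}$ is its largest term w.r.t. $>$ and $\mathtt{LC}$ its coefficient. Tagged polynomials: $\dashv$ is a symbol; $K[\dashv\! X^\dagger]$ is the $K$-vector space with basis the tagged terms $\dashv\! m$ ($m\in X^\dagger$), a right $K[X^\dagger]$-module via $(\dashv\! m)w=\dashv\!(mw)$. For $p=\sum k_im_i\in K[X^\dagger]$ and $w\in X^*$, $\dashv\! w\,p:=\sum k_i\dashv\!(wm_i)$ and $\dashv\! p:=\dashv\! id\,p$. Tagged terms are ordered by $\dashv\! m_1>\dashv\! m_2\iff m_1>m_2$. Reduction: for a mixed set $F=(F_T,F_P)$, $F_T\subseteq K[\dashv\! X^\dagger]$ (tagged part), $F_P\subseteq K[X^\dagger]$ (untagged part), zero elements ignored, the relation $\to_F$ on $K[\dashv\! X^\dagger]$ is: $f\to_F f-\frac{k}{\mathtt{LC}(f_i)}f_iv$ if $f_i\in F_T$, $v\in X^*$ and $\mathtt{LT}(f_i)v$ occurs in $f$ with coefficient $k\neq0$; and $f\to_F f-\frac{k}{\mathtt{LC}(f_i)}\dashv\! w\,f_i\,v$ if $f_i\in F_P$, $w,v\in X^*$ and $\dashv\!(w\,\mathtt{LT}(f_i)\,v)$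 occurs in $f$ with coefficient $k\neq0$. (The paper normalizes all polynomials to be monic.) $\stackrel{*}{\leftrightarrow}_F$ is the reflexive, symmetric, transitive closure of $\to_F$. *)

(* Defs.v *)
From HB Require Import structures.
From mathcomp Require Import all_boot all_order all_algebra.
From mathcomp Require Import finmap.
From mathcomp Require monalg.
From Stdlib Require Import Relations.Relation_Operators.
Import GRing.Theory monalg.

Set Implicit Arguments. Unset Strict Implicit. Unset Printing Implicit Defensive.
Local Open Scope ring_scope.

(* X^dagger : nonempty words over the alphabet X *)
Definition word (X : choiceType) := {w : seq X | w != [::]}.

Lemma cat_word_neq0 (X : choiceType) (u : seq X) (m : word X) (v : seq X) :
  u ++ val m ++ v != [::].
Proof. by case: m => [[|x s]] //=; case: u. Qed.

Definition wcat (X : choiceType) (u : seq X) (m : word X) (v : seq X) : word X :=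
  exist _ (u ++ val m ++ v) (cat_word_neq0 u m v).

Definition wmulw (X : choiceType) (m1 m2 : word X) : word X := wcat [::] m1 (val m2).

Notation wpoly X K := {malg K[word X]}.
(* K[-| X^dagger]: the K-vector space with basis the tagged terms -| m *)
Notation twpoly X K := {malg K[word X]}.

Definition wmul (X : choiceType) (K : fieldType) (w : seq X) (p : wpoly X K) (v : seq X)
  : wpoly X K := \sum_(m <- msupp p) << p@_m *g wcat w m v >>.

Definition dtag (X : choiceType) (K : fieldType) (w : seq X) (p : wpoly X K) : twpoly X K :=
  wmul w p [::].
Definition dtag1 (X : choiceType) (K : fieldType) (p : wpoly X K) : twpoly X K := dtag [::] p.

Definition semigroup_wellorder (X : choiceType) (lt : word X -> word X -> Prop) :=
  [/\ (forall m, ~ lt m m),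
      (forall a b c, lt a b -> lt b c -> lt a c),
      (forall a b, a <> b -> lt a b \/ lt b a),
      well_founded lt &
      (forall m1 m2 (u v : seq X), lt m2 m1 -> lt (wcat u m2 v) (wcat u m1 v))].

Definition is_LT (X : choiceType) (K : fieldType) (lt : word X -> word X -> Prop)
  (f : wpoly X K) (m : word X) :=
  m \in msupp f /\ forall m', m' \in msupp f -> m' <> m -> lt m' m.

Definition red_step (X : choiceType) (K : fieldType) (lt : word X -> word X -> Prop)
  (FT : twpoly X K -> Prop) (FP : wpoly X K -> Prop) (f g : twpoly X K) : Prop :=
  (exists fi m (v : seq X), [/\ FT fi, fi != 0, is_LT lt fi m,
       f@_(wcat [::] m v) != 0 &
       g = f - (f@_(wcat [::] m v) / fi@_m) *: wmul [::] fi v])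
  \/
  (exists fi m (w v : seq X), [/\ FP fi, fi != 0, is_LT lt fi m,
       f@_(wcat w m v) != 0 &
       g = f - (f@_(wcat w m v) / fi@_m) *: wmul w fi v]).

Definition red_equiv (X : choiceType) (K : fieldType) (lt : word X -> word X -> Prop)
  (FT : twpoly X K -> Prop) (FP : wpoly X K -> Prop) : twpoly X K -> twpoly X K -> Prop :=
  clos_refl_sym_trans _ (red_step lt FT FP).

Inductive cong_gen (X : choiceType) (R : word X -> word X -> Prop) : word X -> word X -> Prop :=
  | cg_base a b : R a b -> cong_gen R a b
  | cg_refl a : cong_gen R a a
  | cg_sym a b : cong_gen R a b -> cong_gen R b a
  | cg_trans a b c : cong_gen R a b -> cong_gen R b c -> cong_gen R a c
  | cg_mull a b c : cong_gen R a b -> cong_gen R (wmulw c a) (wmulw c b)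
  | cg_mulr a b c : cong_gen R a b -> cong_gen R (wmulw a c) (wmulw b c).

Definition is_presentation (X : choiceType) (S : Type) (mulS : S -> S -> S)
  (R : word X -> word X -> Prop) (pi : word X -> S) :=
  [/\ (forall a b c, mulS a (mulS b c) = mulS (mulS a b) c),
      (forall a b, pi (wmulw a b) = mulS (pi a) (pi b)),
      (forall s, exists a, pi a = s) &
      (forall a b, pi a = pi b <-> cong_gen R a b)].

Definition salg_mul (S : choiceType) (K : fieldType) (mulS : S -> S -> S)
  (a b : {malg K[S]}) : {malg K[S]} :=
  \sum_(s <- msupp a) \sum_(t <- msupp b) << a@_s * b@_t *g mulS s t >>.

Definition pimg (X S : choiceType) (K : fieldType) (pi : word X -> S) (p : wpoly X K)
  : {malg K[S]} := \sum_(m <- msupp p) << p@_m *g pi m >>.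

Inductive rideal (S : choiceType) (K : fieldType) (mulS : S -> S -> S)
  (G : {malg K[S]} -> Prop) : {malg K[S]} -> Prop :=
  | ri_gen a : G a -> rideal mulS G a
  | ri_zero : rideal mulS G 0
  | ri_add a b : rideal mulS G a -> rideal mulS G b -> rideal mulS G (a + b)
  | ri_scale (k : K) a : rideal mulS G a -> rideal mulS G (k *: a)
  | ri_rmul a b : rideal mulS G a -> rideal mulS G (salg_mul mulS a b).

Definition quot_bij (A B : Type) (eA : A -> A -> Prop) (eB : B -> B -> Prop) :=
  exists f : A -> B,
    (forall a a', eA a a' <-> eB (f a) (f a')) /\ (forall b, exists a, eB (f a) b).

(* Main.v *)
Require Import Defs.
From HB Require Import structures.
From mathcomp Require Import all_boot all_order all_algebra.
From mathcomp Require Import finmap.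
From mathcomp Require monalg.
From Stdlib Require Import Relations.Relation_Operators.
Import GRing.Theory monalg.
Set Implicit Arguments. Unset Strict Implicit.
Local Open Scope ring_scope.

Section Lift.
Variables (K : fieldType) (A B : choiceType) (F : A -> {malg K[B]}).

Definition lift_def (a : {malg K[A]}) : {malg K[B]} := \sum_(m <- msupp a) a@_m *: F m.
Fact lift_key : unit. Proof. exact: tt. Qed.
Definition lift := locked_with lift_key lift_def.

Lemma liftE a : lift a = \sum_(m <- msupp a) a@_m *: F m.
Proof. by rewrite /lift unlock. Qed.

Lemma liftEw (d : {fset A}) a : (msupp a `<=` d)%fset ->
  lift a = \sum_(m <- d) a@_m *: F m.
Proof.
move=> le; rewrite liftE (big_fset_incl _ le) // => x _ /mcoeff_outdom ->.
by rewrite scale0r.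
Qed.

Lemma lift_is_linear c a b : lift (c *: a + b) = c *: lift a + lift b.
Proof.
rewrite (@liftEw (msupp a `|` msupp b)%fset (c *: a + b)); last first.
  apply: fsubset_trans (msuppD_le _ _) _.
  by rewrite fsetSU // msuppZ_le.
rewrite (@liftEw (msupp a `|` msupp b)%fset a) ?fsubsetUl //.
rewrite (@liftEw (msupp a `|` msupp b)%fset b) ?fsubsetUr //.
rewrite scaler_sumr -big_split /=; apply: eq_bigr => m _.
by rewrite mcoeffD mcoeffZ scalerDl scalerA.
Qed.

Lemma lift0 : lift 0 = 0.
Proof. by rewrite liftE msupp0 big_seq_fset0. Qed.

Lemma liftZ c a : lift (c *: a) = c *: lift a.
Proof. by have := lift_is_linear c a 0; rewrite !addr0 lift0 addr0. Qed.

Lemma liftD a b : lift (a + b) = lift a + lift b.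
Proof. by have := lift_is_linear 1 a b; rewrite !scale1r. Qed.

Lemma liftN a : lift (- a) = - lift a.
Proof. by rewrite -scaleN1r liftZ scaleN1r. Qed.

Lemma liftB a b : lift (a - b) = lift a - lift b.
Proof. by rewrite liftD liftN. Qed.

Lemma lift_sum (I : Type) (r : seq I) (f : I -> {malg K[A]}) :
  lift (\sum_(i <- r) f i) = \sum_(i <- r) lift (f i).
Proof. by apply: (big_morph lift liftD lift0). Qed.

Lemma liftU c m : lift << c *g m >> = c *: F m.
Proof. by rewrite (@liftEw _ _ msuppU_le) big_seq_fset1 mcoeffUU. Qed.

Lemma lift1 m : lift << m >> = F m.
Proof. by rewrite liftU scale1r. Qed.

End Lift.

Lemma eq_lift (K : fieldType) (A B : choiceType) (F G : A -> {malg K[B]}) :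
  (forall m, F m = G m) -> forall a, lift F a = lift G a.
Proof. by move=> e a; rewrite !liftE; apply: eq_bigr => m _; rewrite e. Qed.

Lemma malgUZ (K : fieldType) (A : choiceType) (c : K) (m : A) :
  << c *g m >> = c *: << m >>.
Proof.
apply/malgP => k; rewrite mcoeffZ !mcoeffU.
by case: eqP => _; rewrite ?mulr1 ?mulr0.
Qed.

Lemma lift_id (K : fieldType) (A : choiceType) (a : {malg K[A]}) :
  lift (fun m => << m >>) a = a.
Proof.
rewrite liftE [RHS]monalgE; apply: eq_bigr => m _; by rewrite malgUZ.
Qed.

Lemma lift_comp (K : fieldType) (A B C : choiceType)
  (F : A -> {malg K[B]}) (G : B -> {malg K[C]}) a :
  lift G (lift F a) = lift (fun m => lift G (F m)) a.
Proof.
rewrite [lift F a]liftE lift_sum [RHS]liftE; apply: eq_bigr => m _.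
by rewrite liftZ.
Qed.

Lemma lift_sub (K : fieldType) (A B : choiceType) (F G : A -> {malg K[B]}) a :
  lift (fun m => F m - G m) a = lift F a - lift G a.
Proof.
rewrite !liftE -sumrB; apply: eq_bigr => m _; by rewrite scalerBr.
Qed.

Lemma lift_coef_inj (K : fieldType) (A B : choiceType) (h : A -> B) (a : {malg K[A]}) m :
  injective h -> (lift (fun m => << h m >>) a)@_(h m) = a@_m.
Proof.
move=> hi; rewrite liftE raddf_sum /= [in RHS](monalgE a) raddf_sum /=.
apply: eq_bigr => m' _; rewrite mcoeffZ !mcoeffU (inj_eq hi).
by case: eqP; rewrite ?mulr1 ?mulr0.
Qed.

Section Words.
Variables (K : fieldType) (X : choiceType).
Implicit Types (w v : seq X) (m : word X).

Lemma wcat_inj (w v : seq X) : injective (fun m : word X => wcat w m v).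
Proof.
move=> [a Ha] [b Hb] /(congr1 val) /= e.
apply: val_inj => /=.
have sz : size a = size b.
  by move: (congr1 size e); rewrite !size_cat => /addnI /addIn.
move/eqP: e; rewrite eqseq_cat // eqxx /= eqseq_cat // => /andP[/eqP -> _].
done.
Qed.

Lemma wcat_nil m : wcat [::] m [::] = m.
Proof. by apply: val_inj => /=; rewrite cats0. Qed.

Lemma wcat_comp w' w m v v' : wcat w' (wcat w m v) v' = wcat (w' ++ w) m (v ++ v').
Proof. by apply: val_inj => /=; rewrite !catA. Qed.

Lemma wcat_assoc w m v : wcat w m v = wcat [::] (wcat w m [::]) v.
Proof. by apply: val_inj => /=; rewrite cats0 catA. Qed.

Lemma wmulwE (a b : word X) : wmulw a b = wcat [::] a (val b).
Proof. by []. Qed.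

Lemma wmulwE' (a b : word X) : wmulw a b = wcat (val a) b [::].
Proof. by apply: val_inj => /=; rewrite cats0. Qed.

Lemma wmulE w (p : wpoly X K) v : wmul w p v = lift (fun m => << wcat w m v >>) p.
Proof. by rewrite liftE; apply: eq_bigr => m _; rewrite malgUZ. Qed.

Lemma dtag1E (q : wpoly X K) : dtag1 q = q.
Proof.
rewrite /dtag1 /dtag wmulE -[RHS]lift_id; apply: eq_lift => m.
by rewrite wcat_nil.
Qed.

Lemma wmul_comp w' w (p : wpoly X K) v v' :
  wmul w' (wmul w p v) v' = wmul (w' ++ w) p (v ++ v').
Proof.
rewrite !wmulE [LHS]lift_comp; apply: eq_lift => m.
by rewrite lift1 wcat_comp.
Qed.

Lemma wmul_coef w (p : wpoly X K) v m : (wmul w p v)@_(wcat w m v) = p@_m.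
Proof. by rewrite wmulE (lift_coef_inj _ _ (@wcat_inj w v)). Qed.

Lemma wmulU w v m : wmul w (<< m >> : wpoly X K) v = << wcat w m v >>.
Proof. by rewrite wmulE lift1. Qed.

End Words.

Lemma pimgE (X S : choiceType) (K : fieldType) (pi : word X -> S) (p : wpoly X K) :
  pimg pi p = lift (fun m => << pi m >>) p.
Proof. by rewrite liftE; apply: eq_bigr => m _; rewrite malgUZ. Qed.

Lemma salg_mulE (S : choiceType) (K : fieldType) (mulS : S -> S -> S) (a b : {malg K[S]}) :
  salg_mul mulS a b = lift (fun t => lift (fun s => << mulS s t >>) a) b.
Proof.
rewrite /salg_mul exchange_big /= [RHS]liftE; apply: eq_bigr => t _.
rewrite liftE scaler_sumr; apply: eq_bigr => s _.
by rewrite malgUZ scalerA mulrC.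
Qed.

Lemma LT_exists (X : choiceType) (K : fieldType) (lt : word X -> word X -> Prop)
  (Hlt : semigroup_wellorder lt) (f : wpoly X K) :
  f != 0 -> exists m, is_LT lt f m.
Proof.
case: Hlt => irr tr tot _ _ fn0.
suff : forall s : seq (word X), s != [::] ->
  exists2 m, m \in s & forall m', m' \in s -> m' <> m -> lt m' m.
  move/(_ (msupp f)); case.
    by apply: contra fn0 => /eqP e; apply/eqP; rewrite [LHS]monalgE e big_nil.
  by move=> m H1 H2; exists m; split.
elim=> [|x s IH] // _.
case: (altP (s =P [::])) => [->|sn0].
  by exists x; rewrite ?inE // => m'; rewrite inE => /eqP.
case: (IH sn0) => m ms Hm.
case: (@eqP _ x m) => [xm|xm].
  exists m; first by rewrite inE ms orbT.
  by move=> m'; rewrite inE => /orP[/eqP -> //|]; exact: Hm.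
case: (tot _ _ xm) => [ltxm|ltmx].
  exists m; first by rewrite inE ms orbT.
  by move=> m'; rewrite inE => /orP[/eqP -> //|]; exact: Hm.
exists x; first by rewrite inE eqxx.
move=> m'; rewrite inE => /orP[/eqP -> //|m's] m'x.
case: (@eqP _ m' m) => [-> //|m'm].
exact: tr (Hm _ m's m'm) ltmx.
Qed.


Lemma tE (K : fieldType) (X : choiceType) (x f : wpoly X K) (M : word X) (lc c : K) (lc0 : lc != 0) (xM : x@_M = lc) :
  let N (g : wpoly X K) := g - (g@_M / lc) *: x in N (f + c *: x) = N f.
Proof.
move=> N; rewrite /N.
have -> : (f + c *: x)@_M / lc = f@_M / lc + c.
  rewrite mcoeffD.
  rewrite mcoeffZ.
  rewrite xM mulrDl mulfK //.
rewrite scalerDl.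
rewrite opprD.
rewrite addrACA.
rewrite subrr addr0.
done.
Qed.

Section Main.
Variables (K : fieldType) (X : choiceType)
  (lt : word X -> word X -> Prop) (Hlt : semigroup_wellorder lt)
  (S : choiceType) (mulS : S -> S -> S) (R : word X -> word X -> Prop)
  (pi : word X -> S) (Hpres : is_presentation mulS R pi)
  (Q : wpoly X K -> Prop).

Local Notation T := (wpoly X K).

Definition PP : T -> Prop := fun p => exists l r, R l r /\ p = << l >> - << r >>.
Definition QQ' : {malg K[S]} -> Prop := fun a => exists q, Q q /\ a = pimg pi q.
Definition FFT : T -> Prop := fun t => exists q, Q q /\ t = dtag1 q.

Definition GP (x : T) := exists p w v, PP p /\ x = wmul w p v.
Definition GQ (x : T) := exists q v, Q q /\ x = wmul [::] q v.
Definition G0 (x : T) := GP x \/ GQ x.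

Inductive span (G : T -> Prop) : T -> Prop :=
  | sp0 : span G 0
  | spA c x y : G x -> span G y -> span G (c *: x + y).

Lemma span_add G x y : span G x -> span G y -> span G (x + y).
Proof.
move=> sx sy; elim: sx => [|c x' y' gx _ IH]; first by rewrite add0r.
by rewrite -addrA; apply: spA.
Qed.

Lemma span_scale G c x : span G x -> span G (c *: x).
Proof.
elim=> [|d x' y' gx _ IH]; first by rewrite scaler0; constructor.
by rewrite scalerDr scalerA; apply: spA.
Qed.

Lemma span_opp G x : span G x -> span G (- x).
Proof. by move=> sx; rewrite -scaleN1r; apply: span_scale. Qed.

Lemma span_sub G x y : span G x -> span G y -> span G (x - y).
Proof. by move=> sx sy; apply: span_add => //; apply: span_opp. Qed.

Lemma span_gen (G : T -> Prop) x : G x -> span G x.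
Proof. by move=> gx; rewrite -[x]addr0 -[x]scale1r; apply: spA => //; constructor. Qed.

Lemma span_mono (G G' : T -> Prop) x : (forall y, G y -> G' y) -> span G x -> span G' x.
Proof. by move=> GG; elim=> [|c x' y' gx _ IH]; constructor; auto. Qed.

Lemma span_map (G G' : T -> Prop) (H : T -> T) :
  H 0 = 0 -> (forall c x y, H (c *: x + y) = c *: H x + H y) ->
  (forall x, G x -> span G' (H x)) -> forall x, span G x -> span G' (H x).
Proof.
move=> H0 HL HG x; elim=> [|c x' y' gx _ IH]; first by rewrite H0; constructor.
by rewrite HL; apply: span_add => //; apply: span_scale; apply: HG.
Qed.

Lemma span_lift (G : T -> Prop) (A : choiceType) (F : A -> T) b :
  (forall m, span G (F m)) -> span G (lift F b).
Proof.
move=> HF; rewrite liftE; elim/big_ind: _ => //; first by constructor.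
  exact: span_add.
by move=> m _; apply: span_scale.
Qed.

Lemma wmul_lin w v : forall c (x y : T), wmul w (c *: x + y) v = c *: wmul w x v + wmul w y v.
Proof. by move=> c x y; rewrite !wmulE; apply: lift_is_linear. Qed.

Lemma wmul0 w v : wmul w (0 : T) v = 0.
Proof. by rewrite wmulE lift0. Qed.

Lemma span_wmulP w v x : span GP x -> span GP (wmul w x v).
Proof.
apply: (@span_map GP GP (fun y => wmul w y v)); [exact: wmul0 | exact: wmul_lin |].
move=> _ [p [w' [v' [Pp ->]]]]; apply: span_gen.
by exists p, (w ++ w'), (v' ++ v); rewrite wmul_comp.
Qed.

Lemma span_wmul0 v x : span G0 x -> span G0 (wmul [::] x v).
Proof.
apply: (@span_map G0 G0 (fun y => wmul [::] y v)); [exact: wmul0 | exact: wmul_lin |].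
move=> _ [[p [w' [v' [Pp ->]]]]|[q [v' [Qq ->]]]]; apply: span_gen.
  by left; exists p, w', (v' ++ v); rewrite wmul_comp.
by right; exists q, (v' ++ v); rewrite wmul_comp.
Qed.

Lemma wmul_nil (p : T) : wmul [::] p [::] = p.
Proof. exact: dtag1E. Qed.

Lemma cong_span a b : cong_gen R a b -> span GP (<< a >> - << b >>).
Proof.
elim=> {a b}.
- move=> a b Rab; apply: span_gen; exists (<< a >> - << b >>), [::], [::].
  by rewrite wmul_nil; split => //; exists a, b.
- by move=> a; rewrite subrr; constructor.
- by move=> a b _ IH; rewrite -opprB; apply: span_opp.
- move=> a b c _ IH1 _ IH2.
  have -> : (<< a >> - << c >> : T) = (<< a >> - << b >>) + (<< b >> - << c >>).
    by rewrite addrA subrK.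
  exact: span_add.
- move=> a b c _ IH.
  have -> : (<< wmulw c a >> - << wmulw c b >> : T) = wmul (val c) (<< a >> - << b >>) [::].
    by rewrite wmulE [RHS]liftB /= [X in _ = X - _]lift1 [X in _ = _ - X]lift1 !wmulwE'.
  exact: span_wmulP.
- move=> a b c _ IH.
  have -> : (<< wmulw a c >> - << wmulw b c >> : T) = wmul [::] (<< a >> - << b >>) (val c).
    by rewrite wmulE [RHS]liftB /= [X in _ = X - _]lift1 [X in _ = _ - X]lift1 !wmulwE.
  exact: span_wmulP.
Qed.

Lemma cong_wcat w v a b : cong_gen R a b -> cong_gen R (wcat w a v) (wcat w b v).
Proof.
move=> cab; rewrite (wcat_assoc w a v) (wcat_assoc w b v).
have cab' : cong_gen R (wcat w a [::]) (wcat w b [::]).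
  case: w => [|x w]; first by rewrite !wcat_nil.
  pose wd : word X := exist _ (x :: w) isT.
  by rewrite -[x :: w]/(val wd) -!wmulwE'; apply: cg_mull.
move: cab'; case: v => [|x v]; first by rewrite !wcat_nil.
pose vd : word X := exist _ (x :: v) isT.
by rewrite -[x :: v]/(val vd) -!wmulwE => c; apply: cg_mulr.
Qed.


Lemma pi_mul a b : pi (wmulw a b) = mulS (pi a) (pi b).
Proof. by case: Hpres. Qed.

Lemma pi_cong a b : pi a = pi b <-> cong_gen R a b.
Proof. by case: Hpres. Qed.

Lemma exS s : exists a, pi a == s.
Proof. by case: Hpres => _ _ H _; case: (H s) => a <-; exists a. Qed.

Definition sec s := xchoose (exS s).
Lemma secK s : pi (sec s) = s.
Proof. exact/eqP/(xchooseP (exS s)). Qed.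

Definition Tsec (a : {malg K[S]}) : T := lift (fun s => << sec s >>) a.

Lemma pimgK a : pimg pi (Tsec a) = a.
Proof.
rewrite pimgE lift_comp -[RHS]lift_id; apply: eq_lift => s.
by rewrite lift1 secK.
Qed.

Lemma ker_span b : span GP (b - Tsec (pimg pi b)).
Proof.
have -> : b - Tsec (pimg pi b) = lift (fun m => << m >> - << sec (pi m) >>) b.
  rewrite lift_sub [X in _ = X - _]lift_id; congr (_ - _).
  rewrite /Tsec pimgE [LHS]lift_comp.
  by apply: eq_lift => m; rewrite lift1.
apply: span_lift => m; apply: cong_span; apply/pi_cong.
by rewrite secK.
Qed.

Lemma pimg_wmul_r (x : T) (vd : word X) :
  pimg pi (wmul [::] x (val vd)) = salg_mul mulS (pimg pi x) (<< pi vd >> : {malg K[S]}).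
Proof.
rewrite pimgE wmulE lift_comp salg_mulE lift1 pimgE lift_comp.
apply: eq_lift => m; rewrite !lift1 -wmulwE pi_mul //.
Qed.

Lemma pimg_lin : forall c (x y : T), pimg pi (c *: x + y) = c *: pimg pi x + pimg pi y.
Proof. by move=> c x y; rewrite !pimgE; apply: lift_is_linear. Qed.

Lemma span_rideal x : span G0 x -> @rideal S K mulS QQ' (pimg pi x).
Proof.
elim=> [|c x' y' gx _ IH].
  by rewrite pimgE lift0; apply: ri_zero.
rewrite pimg_lin; apply: ri_add => //; apply: ri_scale.
case: gx => [[p [w [v [[l [r [Rlr ->]]] ->]]]]|[q [v [Qq ->]]]].
  have -> : pimg pi (wmul w (<< l >> - << r >> : T) v) = 0.
    rewrite pimgE wmulE [LHS]lift_comp [LHS]liftB [X in X - _]lift1 [X in _ - X]lift1 /= [X in X - _]lift1 [X in _ - X]lift1.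
    have e : pi (wcat w l v) = pi (wcat w r v).
      by apply/pi_cong; apply: cong_wcat; apply: cg_base.
    by rewrite e subrr.
  by apply: ri_zero.
case: v => [|z v].
  by rewrite wmul_nil; apply: ri_gen; exists q.
pose vd : word X := exist _ (z :: v) isT.
rewrite -[z :: v]/(val vd) pimg_wmul_r; apply: ri_rmul; apply: ri_gen.
by exists q.
Qed.

Lemma rideal_span a : @rideal S K mulS QQ' a -> span G0 (Tsec a).
Proof.
elim=> {a}.
- move=> _ [q [Qq ->]].
  have -> : Tsec (pimg pi q) = q - (q - Tsec (pimg pi q)) by rewrite subKr.
  apply: span_sub.
    by apply: span_gen; right; exists q, [::]; rewrite wmul_nil.
  by apply: (span_mono (G := GP)) => [y gy|]; [left | apply: ker_span].
- by rewrite /Tsec lift0; constructor.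
- by move=> a b _ IHa _ IHb; rewrite /Tsec liftD; apply: span_add.
- move=> k a _ IH; have -> : Tsec (k *: a) = k *: Tsec a by rewrite /Tsec liftZ.
  exact: span_scale.
- move=> a b _ IH.
  pose g := lift (fun m => wmul [::] (Tsec a) (val m)) (Tsec b).
  have sg : span G0 g by apply: span_lift => m; apply: span_wmul0.
  have pg : pimg pi g = salg_mul mulS a b.
    rewrite /g pimgE [LHS]lift_comp.
    transitivity (lift (fun m => lift (fun s => (<< mulS s (pi m) >> : {malg K[S]})) a) (Tsec b)).
      apply: eq_lift => m.
      by rewrite -pimgE pimg_wmul_r pimgK salg_mulE lift1.
    rewrite salg_mulE.
    transitivity (lift (fun t => lift (fun s => (<< mulS s t >> : {malg K[S]})) a) (pimg pi (Tsec b))); last first.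
      by rewrite pimgK.
    rewrite pimgE [RHS]lift_comp; apply: eq_lift => m.
    by rewrite lift1.
  have -> : Tsec (salg_mul mulS a b) = g - (g - Tsec (pimg pi g)) by rewrite pg subKr.
  apply: span_sub => //.
  by apply: (span_mono (G := GP)) => [y gy|]; [left | apply: ker_span].
Qed.


Lemma red_to_span f g : red_equiv lt FFT PP f g -> span G0 (f - g).
Proof.
elim=> {f g}.
- move=> f g [[fi [m [v [[q [Qq ->]] _ _ _ ->]]]] | [fi [m [w [v [Pfi _ _ _ ->]]]]]].
    rewrite subKr dtag1E; apply: span_scale; apply: span_gen; right; by exists q, v.
  rewrite subKr; apply: span_scale; apply: span_gen; left; by exists fi, w, v.
- by move=> f; rewrite subrr; constructor.
- by move=> f g _ IH; rewrite -opprB; apply: span_opp.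
- move=> f g h _ IH1 _ IH2.
  have -> : f - h = (f - g) + (g - h) by rewrite addrA subrK.
  exact: span_add.
Qed.

Lemma gen_equiv (x : T) M lc : lc != 0 -> x@_M = lc ->
  (forall g, g@_M != 0 -> red_step lt FFT PP g (g - (g@_M / lc) *: x)) ->
  forall f c, red_equiv lt FFT PP f (f + c *: x).
Proof.
move=> lc0 xM Hs f c.
pose N g := g - (g@_M / lc) *: x.
have HN : forall g, red_equiv lt FFT PP g (N g).
  move=> g; case: (eqVneq (g@_M) 0) => [e|ne].
    by rewrite /N e mul0r scale0r subr0; apply: rst_refl.
  by apply: rst_step; apply: Hs.
have E : N (f + c *: x) = N f by exact: tE.
apply: (@rst_trans _ _ f (N f) (f + c *: x)); first exact: HN.
by rewrite -E; apply: rst_sym; exact: HN.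
Qed.

Lemma gen_equiv0 x : G0 x -> forall f c, red_equiv lt FFT PP f (f + c *: x).
Proof.
case=> [[p [w [v [Pp ->]]]] | [q [v [Qq ->]]]].
- case: (eqVneq p 0) => [->|pn0] f c.
    by rewrite wmul0 scaler0 addr0; apply: rst_refl.
  case: (LT_exists Hlt pn0) => m Hm.
  have lc0 : p@_m != 0 by rewrite mcoeff_neq0; case: Hm.
  apply: (@gen_equiv _ (wcat w m v) (p@_m)) => //; first exact: wmul_coef.
  by move=> g gn0; right; exists p, m, w, v; split.
- case: (eqVneq q 0) => [->|qn0] f c.
    by rewrite wmul0 scaler0 addr0; apply: rst_refl.
  case: (LT_exists Hlt qn0) => m Hm.
  have lc0 : q@_m != 0 by rewrite mcoeff_neq0; case: Hm.
  apply: (@gen_equiv _ (wcat [::] m v) (q@_m)) => //; first exact: wmul_coef.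
  move=> g gn0; left; exists (dtag1 q), m, v; split; first by exists q.
  all: by rewrite ?dtag1E.
Qed.

Lemma span_to_red x : span G0 x -> forall f, red_equiv lt FFT PP f (f + x).
Proof.
elim=> [|c x' y gx _ IH] f; first by rewrite addr0; apply: rst_refl.
rewrite addrA; apply: (@rst_trans _ _ f (f + c *: x')); first exact: gen_equiv0.
exact: IH.
Qed.

Lemma red_iff f g : red_equiv lt FFT PP f g <-> span G0 (f - g).
Proof.
split; first exact: red_to_span.
move=> s; have := span_to_red (span_opp s) f.
by rewrite opprB addrC subrK.
Qed.

Lemma main_thm :
  quot_bij (fun a b : {malg K[S]} => @rideal S K mulS QQ' (a - b)) (red_equiv lt FFT PP).
Proof.
exists Tsec; split.
- move=> a a'; rewrite red_iff.
  have -> : Tsec a - Tsec a' = Tsec (a - a') by rewrite /Tsec liftB.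
  split; first exact: rideal_span.
  by move=> sp; rewrite -(pimgK (a - a')); apply: span_rideal.
- move=> b; exists (pimg pi b); apply/red_iff.
  rewrite -opprB; apply: span_opp.
  by apply: (span_mono (G := GP)) => [y gy|]; [left | apply: ker_span].
Qed.

End Main.

Unset Implicit Arguments.
Set Strict Implicit.

Theorem corollary3p5 (K : fieldType) (X : choiceType)
  (lt : word X -> word X -> Prop) (Hlt : semigroup_wellorder lt)
  (S : choiceType) (mulS : S -> S -> S) (R : word X -> word X -> Prop)
  (pi : word X -> S) (Hpres : is_presentation mulS R pi)
  (Q : wpoly X K -> Prop) :
  let P : wpoly X K -> Prop := fun p => exists l r, R l r /\ p = << l >> - << r >> in
  let Q' : {malg K[S]} -> Prop := fun a => exists q, Q q /\ a = pimg pi q in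
  let FT : twpoly X K -> Prop := fun t => exists q, Q q /\ t = dtag1 q in
  quot_bij (fun a b : {malg K[S]} => rideal mulS Q' (a - b)) (red_equiv lt FT P).
Proof.
move=> P Q' FT.
exact: (main_thm Hlt Hpres Q).
Qed.
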